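(* Let $E$ be a nonzero real Banach space, let $K$ be a nonempty $w(E,E^* )$-compact convex subset of $E$, and let $\mathbb I_K$ be its indicator function ($0$ on $K$, $\infty$ off $K$). Then for all $(y^*,y^{**})\in E^*\times E^{**}$: $(y^*,y^{**})\in G\big((\partial\mathbb I_K)^{\mathbb F}\big)$ if and only if $y^{**}\in\widehat K$ and $\langle y^*,y^{**}\rangle=\sup_{x\in K}\langle x,y^*\rangle$.
   Context: $\widehat x\in E^{**}$ denotes the canonical image of $x\in E$ ($\langle x^*,\widehat x\rangle=\langle x,x^*\rangle$) and $\widehat K=\{\widehat x:x\in K\}$. For proper convex lsc $f$ on $E$, $x^*\in\partial f(x)$ iff $f(x)+f^*(x^* )=\langle x,x^*\rangle$; $\partial\mathbb I_K$ is closed, monotone and quasidense. For a multifunction $S\colon E\rightrightarrows E^*$ with nonempty graph $G(S)$: closed means $G(S)$ norm-closed; monotone means $\langle s-t,s^*-t^*\rangle\ge0$ on $G(S)$; quasidense means for every $(x,x^* )$, $\inf_{(s,s^* )\in G(S)}[\tfrac12\|s-x\|^2+\tfrac12\|s^*-x^*\|^2+\langle s-x,s^*-x^*\rangle]\le0$. Let $\varphi_S(x,x^* )=\sup_{(s,s^* )\in G(S)}[\langle s,x^*\rangle+\langle x,s^*\rangle-\langle s,s^*\rangle]$ and $\varphi_S^*$ its conjugate on $E^*\times E^{**}$ under $\langle (x,x^* ),(y^*,y^{**})\rangle=\langle x,y^*\rangle+\langle x^*,y^{**}\rangle$. For $S$ closed, monotone, quasidense, the Fitzpatrick extension $S^{\mathbb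 F}\colon E^*\rightrightarrows E^{**}$ is given by $(y^*,y^{**})\in G(S^{\mathbb F})$ iff $\varphi_S^*(y^*,y^{**})=\langle y^*,y^{**}\rangle$. *)

(* Defs.v *)
From HB Require Import structures.
From mathcomp Require Import all_boot all_order all_algebra.
From mathcomp Require Import all_classical all_reals all_analysis.
Set Implicit Arguments.
Unset Strict Implicit.
Unset Printing Implicit Defensive.
Import Order.TTheory GRing.Theory Num.Theory.
Import numFieldNormedType.Exports.
Local Open Scope classical_set_scope.
Local Open Scope ring_scope.

Section Duality.
Variables (R : realType) (E : normedModType R).

Record dual := Dual {
  dual_fun :> E -> R ;
  dual_linear : forall (a : R) (x y : E), dual_fun (a *: x + y) = a * dual_fun x + dual_fun y ;
  dual_cont : continuous dual_fun }.

Definition dual_norm (f : dual) : R :=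
  sup [set `|f x| | x in [set x : E | `|x| <= 1]].

Record bidual := Bidual {
  bidual_fun :> dual -> R ;
  bidual_linear : forall (a : R) (f g h : dual),
     (forall x, h x = a * f x + g x) -> bidual_fun h = a * bidual_fun f + bidual_fun g ;
  bidual_bounded : exists M : R, forall f : dual, `|bidual_fun f| <= M * dual_norm f }.

Definition in_hat (K : set E) (yss : bidual) : Prop :=
  exists2 x, K x & forall f : dual, yss f = f x.

(* the weak topology w(E,E^* ): initial topology of x |-> (f |-> f x),
   with the product (pointwise) topology on E^* -> R *)
Definition weak_eval (x : E) : {ptws dual -> R} := fun f : dual => f x.
Definition weakE := initial_topology weak_eval.
Definition weakly_compact (K : set E) : Prop := @compact weakE K.

Definition convex_set_of (K : set E) : Prop :=
  forall x y, K x -> K y -> forall t : R, 0 <= t <= 1 -> K (t *: x + (1 - t) *: y).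

Definition indicator (K : set E) (x : E) : \bar R :=
  if `[< K x >] then 0%E else +oo%E.

Definition subdiff (f : E -> \bar R) (x : E) (xs : dual) : Prop :=
  f x \is a fin_num /\ forall y : E, (f x + (xs y - xs x)%:E <= f y)%E.

Definition fitz_phi (S : E -> dual -> Prop) (x : E) (xs : dual) : \bar R :=
  ereal_sup [set r | exists (s : E) (ss : dual), S s ss /\ r = (xs s + ss x - ss s)%:E].

Definition fitz_phi_conj (S : E -> dual -> Prop) (ys : dual) (yss : bidual) : \bar R :=
  ereal_sup [set r | exists (x : E) (xs : dual),
                       r = ((ys x + yss xs)%:E - fitz_phi S x xs)%E].

Definition fitz_ext (S : E -> dual -> Prop) (ys : dual) (yss : bidual) : Prop :=
  fitz_phi_conj S ys yss = (yss ys)%:E.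

End Duality.

(* Main.v *)
Require Import Defs.
From HB Require Import structures.
From mathcomp Require Import all_boot all_order all_algebra.
From mathcomp Require Import all_classical all_reals all_analysis.
From mathcomp Require Import ring lra.
Import Order.TTheory GRing.Theory Num.Theory.
Import numFieldNormedType.Exports.
Local Open Scope classical_set_scope.
Local Open Scope ring_scope.

Section Aux.
Variables (R : realType) (E : completeNormedModType R).

HB.instance Definition _ := gen_eqMixin (dual E).
HB.instance Definition _ := gen_choiceMixin (dual E).

Lemma dual0 (f : dual E) : f 0 = 0.
Proof.
have := dual_linear f 1 0 0; rewrite scale1r addr0 mul1r => h.
by apply: (addrI (f 0)); rewrite -h addr0.
Qed.

Lemma dualZD (f : dual E) (a b : R) (x y : E) :
  f (a *: x + b *: y) = a * f x + b * f y.
Proof.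
rewrite dual_linear; congr (_ + _).
by have := dual_linear f b y 0; rewrite addr0 dual0 addr0.
Qed.

Definition dLin_fun (a : R) (f g : dual E) (x : E) : R := a * f x + g x.
Lemma dLin_linear a f g : forall (b : R) (x y : E),
  dLin_fun a f g (b *: x + y) = b * dLin_fun a f g x + dLin_fun a f g y.
Proof. by move=> b x y; rewrite /dLin_fun !dual_linear; ring. Qed.
Lemma dLin_cont a f g : continuous (dLin_fun a f g).
Proof.
move=> x; rewrite /dLin_fun.
have h1 : {for x, continuous (fun y => a * f y)}.
  apply: (@continuousM R E (fun=> a) (dual_fun f)); [exact: cst_continuous | exact: (@dual_cont _ _ f)].
exact: (continuousD h1 (@dual_cont _ _ g x)).
Qed.
Definition dLin a f g : dual E := @Dual R E _ (dLin_linear a f g) (dLin_cont a f g).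

Definition dzero_fun (x : E) : R := 0.
Lemma dzero_linear : forall (b : R) (x y : E),
  dzero_fun (b *: x + y) = b * dzero_fun x + dzero_fun y.
Proof. by move=> b x y; rewrite /dzero_fun mulr0 addr0. Qed.
Lemma dzero_cont : continuous dzero_fun.
Proof. move=> x; exact: cst_continuous. Qed.
Definition dzero : dual E := @Dual R E _ dzero_linear dzero_cont.

Lemma yss_lin (yss : bidual E) a f g : yss (dLin a f g) = a * yss f + yss g.
Proof. by apply: bidual_linear. Qed.

Lemma yss0 (yss : bidual E) : yss dzero = 0.
Proof.
have := @bidual_linear R E yss (-1) dzero dzero dzero.
rewrite mulN1r addNr; apply => x /=; rewrite /dzero_fun; ring.
Qed.

Fixpoint comb (l : seq (dual E)) (c : dual E -> R) : dual E :=
  match l with [::] => dzero | i :: l' => dLin (c i) i (comb l' c) end.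

Lemma combE l c x : comb l c x = \sum_(i <- l) c i * i x.
Proof.
elim: l => [|i l IH] /=; first by rewrite big_nil.
by rewrite big_cons /dLin_fun IH.
Qed.

Lemma yss_comb (yss : bidual E) l c : yss (comb l c) = \sum_(i <- l) c i * yss i.
Proof.
elim: l => [|i l IH] /=; first by rewrite big_nil yss0.
by rewrite big_cons yss_lin IH.
Qed.

Lemma subdiffP (K : set E) s (ss : dual E) :
  subdiff (indicator K) s ss <-> K s /\ forall y, K y -> ss y <= ss s.
Proof.
rewrite /subdiff /indicator; split.
- have [Ks|nKs] := pselect (K s); last by rewrite (asboolF nKs) => -[].
  rewrite (asboolT Ks) => -[_ H]; split=> // y Ky.
  by have := H y; rewrite asboolT // add0e lee_fin subr_le0.
- move=> [Ks H]; rewrite asboolT //; split=> // y; rewrite add0e.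
  have [Ky|nKy] := pselect (K y).
    by rewrite asboolT // lee_fin subr_le0; exact: H.
  by rewrite asboolF // leey.
Qed.

Lemma phi_ge (S : E -> dual E -> Prop) x (xs : dual E) s ss : S s ss ->
  ((xs s + ss x - ss s)%:E <= fitz_phi S x xs)%E.
Proof. by move=> H; apply: ereal_sup_ubound; exists s, ss. Qed.

Lemma phi_le (S : E -> dual E -> Prop) x (xs : dual E) c :
  (forall s ss, S s ss -> xs s + ss x - ss s <= c) -> (fitz_phi S x xs <= c%:E)%E.
Proof. by move=> H; apply: ub_ereal_sup => r [s [ss [Hs ->]]]; rewrite lee_fin; exact: H. Qed.

Lemma conj_ge (S : E -> dual E -> Prop) (ys : dual E) (yss : bidual E) x xs :
  ((ys x + yss xs)%:E - fitz_phi S x xs <= fitz_phi_conj S ys yss)%E.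
Proof. by apply: ereal_sup_ubound; exists x, xs. Qed.

Lemma conj_le (S : E -> dual E -> Prop) (ys : dual E) (yss : bidual E) c :
  (forall x xs, ((ys x + yss xs)%:E - fitz_phi S x xs <= c)%E) ->
  (fitz_phi_conj S ys yss <= c)%E.
Proof. by move=> H; apply: ub_ereal_sup => r [x [xs ->]]. Qed.

End Aux.

Lemma subeE_le (R : realType) (a b c : R) (p : \bar R) :
  (b%:E <= p)%E -> a - b <= c -> (a%:E - p <= c%:E)%E.
Proof.
case: p => [r| |] //=.
- by rewrite !lee_fin => h1 h2; lra.
- by move=> _ _; rewrite leNye.
Qed.

Lemma subeE_ge (R : realType) (a c : R) (p : \bar R) :
  (p <= c%:E)%E -> ((a - c)%:E <= a%:E - p)%E.
Proof.
case: p => [r| |] //=.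
- by rewrite !lee_fin => h1; lra.
- by move=> _; rewrite leey.
Qed.


Section Main.
Variables (R : realType) (E : completeNormedModType R) (K : set E).

Local Notation S := (subdiff (indicator K)).
Local Notation dz := (@dzero R E).

Lemma phi_K x (xs : dual E) c : K x -> (forall s, K s -> xs s <= c) ->
  (fitz_phi S x xs <= c%:E)%E.
Proof.
move=> Kx H; apply: phi_le => s ss /subdiffP [Ks hs].
have := H s Ks; have := hs x Kx; lra.
Qed.

Lemma back (ys : dual E) (yss : bidual E) :
  in_hat K yss /\ (yss ys)%:E = ereal_sup [set (ys x)%:E | x in K] ->
  fitz_ext S ys yss.
Proof.
move=> [[x0 Kx0 hx0] hsup].
have ys_max : forall x, K x -> ys x <= ys x0.
  by move=> x Kx; rewrite -lee_fin -hx0 hsup; apply: ereal_sup_ubound; exists x.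
have Sx0 : S x0 ys by apply/subdiffP.
rewrite /fitz_ext; apply: le_anti; apply/andP; split.
- apply: conj_le => x xs; rewrite hx0 (hx0 ys).
  by apply: (@subeE_le R) (@phi_ge R E S x xs x0 ys Sx0) _; lra.
 apply: (le_trans _ (@conj_ge R E S ys yss x0 dz)).
  rewrite yss0 addr0 (hx0 ys).
  have hp : (fitz_phi S x0 dz <= 0%:E)%E.
    by apply: phi_K => // s _; rewrite /= /dzero_fun.
  by have := @subeE_ge R (ys x0) _ _ hp; rewrite subr0.
Qed.

Hypothesis (ys : dual E) (yss : bidual E) (H : fitz_ext S ys yss).

Lemma key x0 (xi : dual E) : K x0 -> (forall s, K s -> xi s <= xi x0) ->
  yss xi <= xi x0.
Proof.
move=> Kx0 hmax.
have ht : forall t, 0 <= t -> ys x0 + t * yss xi - t * xi x0 <= yss ys.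
  move=> t t0; have := @conj_ge R E S ys yss x0 (@dLin R E t xi dz).
  rewrite H yss_lin yss0 addr0.
  have hp : (fitz_phi S x0 (@dLin R E t xi dz) <= (t * xi x0)%:E)%E.
    apply: phi_K => // s Ks; rewrite /= /dLin_fun /dzero_fun addr0.
    by apply: ler_wpM2l => //; exact: hmax.
  by move=> h; have := le_trans (@subeE_ge R _ _ _ hp) h; rewrite lee_fin; lra.
rewrite leNgt; apply/negP => hlt.
set d := yss xi - xi x0.
have d0 : 0 < d by rewrite /d subr_gt0.
set C := yss ys - ys x0.
have := ht ((`|C| + 1) / d) (divr_ge0 (addr_ge0 (normr_ge0 _) ler01) (ltW d0)).
have -> : ys x0 + (`|C| + 1) / d * yss xi - (`|C| + 1) / d * xi x0
        = ys x0 + ((`|C| + 1) / d * d) by rewrite /d; ring.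
rewrite divfK ?gt_eqF //.
have := ler_norm C; rewrite /C; lra.
Qed.

End Main.


Section Fin.
Variables (R : realType) (E : completeNormedModType R).

Definition wf (f : dual E) : weakE E -> R := fun x => f x.
Lemma wcont (f : dual E) : continuous (wf f).
Proof.
have h1 := @initial_continuous _ _ (@weak_eval R E).
have h2 := @proj_continuous (dual E) (fun=> R) f.
by move=> x; apply: (continuous_comp (h1 x) (h2 _)).
Qed.

Variable (yss : bidual E).

Definition Fw (l : seq (dual E)) : weakE E -> R :=
  fun x => \sum_(i <- l) (wf i x - yss i) ^+ 2.

Lemma Fw_cont l : continuous (Fw l).
Proof.
elim: l => [|i l IH].
  have -> : Fw [::] = (fun=> 0) by apply: funext => x; rewrite /Fw big_nil.
  by move=> x; apply: cst_continuous.
have -> : Fw (i :: l) = (fun x => (wf i x - yss i) * (wf i x - yss i)) + Fw l.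
  by apply: funext => x; rewrite /Fw big_cons expr2.
move=> x; apply: continuousD; last exact: IH.
have hi : {for x, continuous (fun y => wf i y - yss i)}.
  apply: (@continuousD R R^o _ (wf i) (fun=> - yss i)); first exact: wcont.
  exact: cst_continuous.
exact: (continuousM hi hi).
Qed.


Variables (K : set E) (K_ne : K !=set0) (K_convex : convex_set_of K)
  (K_wcompact : weakly_compact K).

Definition Gw l : weakE E -> R := fun x => - Fw l x.

Lemma exists_min l : exists x0, K x0 /\ forall x, K x -> Fw l x0 <= Fw l x.
Proof.
set A := Gw l @` K.
have cA : compact A.
  apply: (@continuous_compact (weakE E) R (Gw l) K); last exact: K_wcompact.
  apply: continuous_subspaceT => x; apply: continuousN; exact: Fw_cont.
have A0 : A !=set0 by case: K_ne => x Kx; exists (Gw l x), x.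
have hs := compact_has_sup A0 cA.
have clA := compact_closed (@Rhausdorff R) cA.
have supA : supremums A (sup A).
  by split; [exact: sup_upper_bound hs | move=> y uy; exact: ge_sup A0 uy].
have [x0 Kx0 e] := itv_closed_supremums A0 clA supA.
exists x0; split => // x Kx.
have := sup_upper_bound hs (ex_intro2 _ _ x Kx erefl).
by rewrite -e /Gw; lra.
Qed.


Variables (ys : dual E) (H : fitz_ext (subdiff (indicator K)) ys yss).

Lemma FIN (l : seq (dual E)) : exists x0, K x0 /\ forall i, i \in l -> i x0 = yss i.
Proof.
have [x0 [Kx0 hmin]] := exists_min l.
pose c := fun i : dual E => i x0 - yss i.
have var : forall x, K x -> 0 <= \sum_(i <- l) c i * (i x - i x0).
  move=> x Kx.
  set A := \sum_(i <- l) c i * (i x - i x0).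
  set B := \sum_(i <- l) (i x - i x0) ^+ 2.
  have B0 : 0 <= B by apply: sumr_ge0 => i _; exact: sqr_ge0.
  have hF : forall t, 0 <= t <= 1 -> Fw l x0 <= Fw l x0 + t * (2 * A + t * B).
    move=> t /andP[t0 t1].
    have Kt := @K_convex x x0 Kx Kx0 t (introT andP (conj t0 t1)).
    have := hmin _ Kt.
    suff -> : Fw l (t *: x + (1 - t) *: x0) = Fw l x0 + t * (2 * A + t * B) by [].
    rewrite /Fw /wf /A /B.
    under eq_bigr => i _ do rewrite dualZD.
    transitivity (\sum_(i <- l) ((i x0 - yss i) ^+ 2 +
       (2 * t * (c i * (i x - i x0)) + t ^+ 2 * (i x - i x0) ^+ 2))).
      by apply: eq_bigr => i _; rewrite /c; ring.
    rewrite big_split /= big_split /= -!mulr_sumr; ring.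
  rewrite leNgt; apply/negP => A0.
  set D := B - 2 * A.
  have D0 : 0 < D by rewrite /D; lra.
  set t := - A / D.
  have tD : t * D = - A by rewrite /t divfK ?gt_eqF.
  have t0 : 0 < t by rewrite /t divr_gt0 // oppr_gt0.
  have t1 : t <= 1.
    have : t * D <= 1 * D by rewrite tD mul1r /D; lra.
    by rewrite ler_pM2r.
  have := hF t (introT andP (conj (ltW t0) t1)).
  have e : 2 * A + t * B = A * (1 + 2 * t) by move: tD; rewrite /D; lra.
  rewrite e.
  have : A * (1 + 2 * t) < 0 by rewrite nmulr_rlt0 //; lra.
  move=> h1; have : t * (A * (1 + 2 * t)) < 0 by rewrite pmulr_rlt0.
  lra.
pose xi := @comb R E l (fun i => - c i).
have hmax : forall s, K s -> xi s <= xi x0.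
  move=> s Ks; rewrite !combE; have := var s Ks.
  suff -> : \sum_(i <- l) c i * (i s - i x0) =
     \sum_(i <- l) (- c i * i x0) - \sum_(i <- l) (- c i * i s) by rewrite subr_ge0.
  by rewrite -sumrB; apply: eq_bigr => i _; ring.
have := @key R E K ys yss H x0 xi Kx0 hmax.
rewrite yss_comb combE => h.
have hsum : \sum_(i <- l) c i ^+ 2 <= 0.
  have -> : \sum_(i <- l) c i ^+ 2 =
     \sum_(i <- l) (- c i * yss i) - \sum_(i <- l) (- c i * i x0).
    by rewrite -sumrB; apply: eq_bigr => i _; rewrite /c; ring.
  lra.
have h0 : \sum_(i <- l) c i ^+ 2 = 0.
  by apply/le_anti; rewrite hsum sumr_ge0 // => i _; exact: sqr_ge0.
move/eqP: h0; rewrite psumr_eq0 => [/allP hall|i _]; last exact: sqr_ge0.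
exists x0; split => // i il.
by have := hall i il; rewrite /= sqrf_eq0 /c subr_eq0 => /eqP.
Qed.


Lemma exists_hat : exists x0, K x0 /\ forall f : dual E, yss f = f x0.
Proof.
have := K_wcompact; rewrite /weakly_compact compact_In0.
move=> /(_ (dual E) setT (fun f => K `&` [set x : weakE E | wf f x = yss f])).
case.
- exists (fun f => [set x : weakE E | wf f x = yss f]) => // f _.
  apply: (@preimage_closed _ _ (wf f) [set yss f]).
    by move=> x _; exact: wcont.
  by apply: accessible_closed_set1; apply: hausdorff_accessible; exact: Rhausdorff.
- move=> D' _; have [x0 [Kx0 h]] := FIN (finmap.enum_fset D').
  by exists x0 => i /= hi; split => //; rewrite /wf h.
- move=> x0 hx; have [Kx0 _] := hx (@dzero R E) I.
  by exists x0; split => // f; have [_ e] := hx f I; rewrite -e.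
Qed.

End Fin.

Theorem theorem3p9 (R : realType) (E : completeNormedModType R)
  (E_nonzero : exists x : E, x != 0)
  (K : set E) (K_ne : K !=set0) (K_convex : convex_set_of K)
  (K_wcompact : weakly_compact K) :
  forall (ys : dual E) (yss : bidual E),
    fitz_ext (subdiff (indicator K)) ys yss <->
    (in_hat K yss /\ (yss ys)%:E = ereal_sup [set (ys x)%:E | x in K]).
Proof.
move=> ys yss; split; last exact: back.
move=> H.
have [x0 [Kx0 hx0]] := @exists_hat R E yss K K_ne K_convex K_wcompact ys H.
split; first by exists x0.
apply: le_anti; apply/andP; split.
- by rewrite hx0; apply: ereal_sup_ubound; exists x0.
- apply: ub_ereal_sup => _ [x Kx <-].
  have := @conj_ge R E (subdiff (indicator K)) ys yss x (@dzero R E).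
  rewrite H yss0 addr0.
  have hp : (fitz_phi (subdiff (indicator K)) x (@dzero R E) <= 0%:E)%E.
    by apply: phi_K => // s _; rewrite /= /dzero_fun.
  by move=> h; have := le_trans (@subeE_ge R (ys x) _ _ hp) h; rewrite subr0.
Qed.
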